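(* Fix $M$, integers $L,l$, and a job set $J$ with $L\ge D(J)$, and let $h$ be a hash function that is $(L,l)$-good for $J$. Then, for any starting positions of the jobs and any choices of which eligible job to work on, the algorithm StatelessWeakScheduler run on $J$ with parameters $L,l,h$ completes at least half of the jobs within $2Ll$ time steps.
   Context: Job-shop scheduling with unit jobs: machines $M$; jobs $J$ with sequences $\mathrm{seq}(j)\in M^*$, unique identifiers $\mathrm{ind}(j)\in I=\{1,\dots,|M|^c\}$ and positions $\mathrm{pos}(j)_t\in\{0,\dots,\mathrm{len}(\mathrm{seq}(j))\}$ (completed at the last value; here initial positions are arbitrary); $\mathrm{que}(m)_t=\{j:\mathrm{seq}(j)_{\mathrm{pos}(j)_t}=m\}$; each step each machine works on at most one job in its queue, which advances one position. $D(J)=\max_j\mathrm{len}(\mathrm{seq}(j))$. For $h:M^*\times I\to\{0,\dots,L-1\}$ with $h(j):=h(\mathrm{seq}(j),\mathrm{ind}(j))$: $\mathrm{virt}(j,i)=h(j)+i$ for $i<\mathrm{len}(\mathrm{seq}(j))$ and $\infty$ otherwise; $\mathrm{virt}(j)_t=\mathrm{virt}(j,\mathrm{pos}(j)_t)$. StatelessWeakScheduler$(m,L,l,h,t)$ at time $t$ (counted from the subroutine's start): $T=\lfloor t/l\rfloor$, $Q=\{j\in\mathrm{que}(m)_t:\mathrm{virt}(j)_t=T\}$; if $0<|Q|\le l$ machine $m$ works on an arbitrary $j\in Q$, else does nothing. Bad pattern (for fixed $M,L,l,J$): sets $B_{T,m}$, $0\le T<2L$, $m\in M$, of (job, position) pairs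 with $\mathrm{seq}(j)_i=m$ for $(j,i)\in B_{T,m}$; each $j\in J$ appears at most once in $\bigsqcup B_{T,m}$; $|B_{T,m}|\in\{0\}\cup(l,|J|]$; $\sum|B_{T,m}|>|J|/2$. It occurs for $h$ if $\mathrm{virt}(j,i)=T$ for all $(j,i)\in B_{T,m}$ and all $(T,m)$. $h$ is $(L,l)$-good for $J$ if no bad pattern occurs for $h$. *)

(* Defs.v *)
From mathcomp Require Import all_boot.
Set Implicit Arguments. Unset Strict Implicit. Unset Printing Implicit Defensive.

Section JobShop.
(* Hash function h : seq M -> nat -> nat (only its values on the identifier
   range I = {1,..,|M|^c} matter; range conditions are hypotheses). *)
Variables (M J : finType) (sq : J -> seq M) (ind : J -> nat).
Variable h : seq M -> nat -> nat.

Definition hj (j : J) : nat := h (sq j) (ind j).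

Definition Dmax : nat := \max_(j : J) size (sq j).

(* virt(j,i) = T, where virt(j,i) = h(j)+i if i < len(seq j), and infinity
   otherwise (so it never equals a natural number T). *)
Definition virt_eq (j : J) (i T : nat) : bool :=
  (i < size (sq j)) && (hj j + i == T).

(* j \in que(m) at positions pos: seq(j)_{pos j} = m (undefined if completed) *)
Definition in_que (pos : J -> nat) (m : M) (j : J) : bool :=
  onth (sq j) (pos j) == Some m.

Definition Qset (l t : nat) (pos : J -> nat) (m : M) : {set J} :=
  [set j | in_que pos m j & virt_eq j (pos j) (t %/ l)].

(* One step of StatelessWeakScheduler(m,L,l,h,t) at time t, run on all
   machines simultaneously, with an arbitrary choice [sel] among eligible jobs:
   positions [pos] become [pos']. *)
Definition sws_step (l t : nat) (pos pos' : J -> nat) : Prop :=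
  exists sel : M -> option J,
    (forall m, if (0 < #|Qset l t pos m| <= l)
               then exists2 j, sel m = Some j & j \in Qset l t pos m
               else sel m = None) /\
    (forall j, pos' j = if [exists m, sel m == Some j] then (pos j).+1 else pos j).

Definition sws_run (l : nat) (pos : nat -> J -> nat) : Prop :=
  (forall j, pos 0 j <= size (sq j)) /\
  (forall t, sws_step l t (pos t) (pos t.+1)).

Definition bad_pattern (L l : nat) (B : 'I_(2 * L) -> M -> seq (J * nat)) : Prop :=
  [/\ forall T m, uniq (B T m),
      forall T m p, p \in B T m -> onth (sq p.1) p.2 = Some m,
      forall T m T' m' p p', p \in B T m -> p' \in B T' m' -> p.1 = p'.1 ->
        [/\ T = T', m = m' & p = p'],
      forall T m, size (B T m) = 0 \/ l < size (B T m) <= #|J|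
    & #|J| < 2 * (\sum_(T < 2 * L) \sum_(m : M) size (B T m))].

Definition pattern_occurs (L : nat) (B : 'I_(2 * L) -> M -> seq (J * nat)) : Prop :=
  forall T m p, p \in B T m -> virt_eq p.1 p.2 T.

Definition good_hash (L l : nat) : Prop :=
  forall B : 'I_(2 * L) -> M -> seq (J * nat),
    @bad_pattern L l B -> ~ @pattern_occurs L B.

End JobShop.

(* Main.v *)
Require Import Defs.
From mathcomp Require Import all_boot zify.
Set Implicit Arguments. Unset Strict Implicit.

Lemma inQ (M J : finType) (sq : J -> seq M) (ind : J -> nat) h l t (p : J -> nat) m j :
  (j \in Qset sq ind h l t p m) =
  [&& onth (sq j) (p j) == Some m, p j < size (sq j) & hj sq ind h j + p j == t %/ l].
Proof. by rewrite inE /in_que /virt_eq. Qed.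

Lemma adv (M J : finType) (sq : J -> seq M) (ind : J -> nat) h l (pos : nat -> J -> nat) t j :
  sws_run sq ind h l pos -> pos t.+1 j != pos t j ->
  pos t.+1 j = (pos t j).+1 /\ exists m, j \in Qset sq ind h l t (pos t) m.
Proof.
move=> [_ hs] hne; have [sel [hsel hpos]] := hs t.
move: hne; rewrite hpos; case: existsP => [[m /eqP hm]|_]; last by rewrite eqxx.
move=> _; split => //; exists m; move: (hsel m); case: ifP => _.
  by move=> [j0 h0 hj0]; rewrite hm in h0; case: h0 => ->.
by rewrite hm.
Qed.

Lemma noadv (M J : finType) (sq : J -> seq M) (ind : J -> nat) h l (pos : nat -> J -> nat) t j m :
  sws_run sq ind h l pos -> j \in Qset sq ind h l t (pos t) m ->
  ~~ (0 < #|Qset sq ind h l t (pos t) m| <= l) -> pos t.+1 j = pos t j.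
Proof.
move=> [_ hs] hjQ hn; have [sel [hsel hpos]] := hs t.
rewrite hpos; case: existsP => // [[m' /eqP hm']].
move: (hsel m'); case: ifP => hc.
  move=> [j0 h0 hj0]; rewrite hm' in h0; case: h0 => ej; subst j0.
  move: hjQ hj0; rewrite !inQ => /and3P [/eqP e1 _ _] /and3P [/eqP e2 _ _].
  rewrite e1 in e2; case: e2 => em; subst m'.
  by rewrite hc in hn.
by rewrite hm'.
Qed.

Lemma advex (M J : finType) (sq : J -> seq M) (ind : J -> nat) h l (pos : nat -> J -> nat) t m :
  sws_run sq ind h l pos -> 0 < #|Qset sq ind h l t (pos t) m| <= l ->
  exists2 j0, j0 \in Qset sq ind h l t (pos t) m & pos t.+1 j0 = (pos t j0).+1.
Proof.
move=> [_ hs] hc; have [sel [hsel hpos]] := hs t.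
move: (hsel m); rewrite hc => -[j0 h0 hj0]; exists j0 => //.
rewrite hpos; case: existsP => // -[]; by exists m; rewrite h0.
Qed.

Lemma pos_le (M J : finType) (sq : J -> seq M) (ind : J -> nat) h l (pos : nat -> J -> nat) t j :
  sws_run sq ind h l pos -> pos t j <= size (sq j).
Proof.
move=> hr; elim: t => [|t IH]; first by case: hr.
case: (eqVneq (pos t.+1 j) (pos t j)) => [->//|hne].
have [-> [m]] := adv hr hne; by rewrite inQ => /and3P [].
Qed.

Lemma phase_div l V k : 0 < l -> k < l -> (V * l + k) %/ l = V.
Proof. by move=> l0 kl; rewrite divnMDl // divn_small // addn0. Qed.

Lemma stuck_back (M J : finType) (sq : J -> seq M) (ind : J -> nat) h l (pos : nat -> J -> nat) N j :
  sws_run sq ind h l pos -> 0 < l ->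
  (hj sq ind h j + pos N j) * l <= N ->
  forall t, (hj sq ind h j + pos N j) * l <= t <= N -> pos t j = pos N j.
Proof.
move=> hr l0; set V := hj sq ind h j + pos N j; set X := V * l => hX.
suff H : forall d, X + d <= N -> pos (N - d) j = pos N j.
  move=> t /andP [h1 h2]; have -> : t = N - (N - t) by lia.
  apply: H; lia.
elim => [|d IH] hd; first by rewrite subn0.
have e : (N - d.+1).+1 = N - d by lia.
have IH' : pos (N - d) j = pos N j by apply: IH; lia.
rewrite -e in IH'.
case: (eqVneq (pos (N - d.+1).+1 j) (pos (N - d.+1) j)) => [<-//|hne].
have [hp [m]] := adv hr hne; rewrite inQ => /and3P [_ _ /eqP hv].
have : V <= (N - d.+1) %/ l by rewrite leq_divRL //; lia.
rewrite -hv /V -IH' hp; lia.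
Qed.

Lemma stuck_fwd (M J : finType) (sq : J -> seq M) (ind : J -> nat) h l (pos : nat -> J -> nat) t0 j :
  sws_run sq ind h l pos ->
  hj sq ind h j + pos t0 j < t0 %/ l ->
  forall t, t0 <= t -> pos t j = pos t0 j.
Proof.
move=> hr hlt; elim => [|t IH] ht; first by have -> : t0 = 0 by lia.
case: (leqP t0 t) => h1; last by have -> : t0 = t.+1 by lia.
have IH' := IH h1.
case: (eqVneq (pos t.+1 j) (pos t j)) => [->//|hne].
have [hp [m]] := adv hr hne; rewrite inQ => /and3P [_ _ /eqP hv].
have : t0 %/ l <= t %/ l by apply: leq_div2r.
rewrite -hv IH'; lia.
Qed.

Lemma bigQ (M J : finType) (sq : J -> seq M) (ind : J -> nat) h l (pos : nat -> J -> nat) V j m p :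
  sws_run sq ind h l pos -> 0 < l ->
  (forall t, V * l <= t <= V * l + l -> pos t j = p) ->
  p < size (sq j) -> hj sq ind h j + p = V -> onth (sq j) p = Some m ->
  l < #|Qset sq ind h l (V * l) (pos (V * l)) m|.
Proof.
move=> hr l0 hpos hs hV ho; rewrite ltnNge; apply/negP => hle.
set X := V * l in hpos hle *.
pose Q k := Qset sq ind h l (X + k) (pos (X + k)) m.
have jQ : forall k, k < l -> j \in Q k.
  move=> k hk; rewrite inQ hpos; last by lia.
  by rewrite ho eqxx hs /X phase_div // hV eqxx.
have key : forall k, k < l -> #|Q k| + k <= l.
  elim => [|k IH] hk; first by rewrite addn0 /Q addn0.
  have IH' := IH (ltnW hk).
  have c : 0 < #|Q k| <= l.
    apply/andP; split; last by lia.
    by apply/card_gt0P; exists j; apply: jQ; lia.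
  have [j0 hj0 hadv] := advex hr c.
  have d1 : (X + k) %/ l = V by rewrite phase_div //; lia.
  have d2 : (X + k).+1 %/ l = V by rewrite -addnS phase_div //.
  have sub : Q k.+1 \subset Q k :\ j0.
    apply/subsetP => x; rewrite /Q addnS inQ => /and3P [o s e].
    case: (eqVneq (pos (X + k).+1 x) (pos (X + k) x)) => [eq|ne].
      rewrite in_setD1; apply/andP; split.
        by apply/eqP => ex; subst x; rewrite hadv in eq; lia.
      by rewrite inQ -eq o s /= d1 -d2.
    have [hp [m']] := adv hr ne; rewrite inQ => /and3P [_ _ /eqP hv].
    move: e; rewrite hp d2; rewrite d1 in hv; lia.
  have := cardsD1 j0 (Q k); rewrite hj0 /=; have := subset_leq_card sub; lia.
have hl1 : l.-1 < l by lia.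
have k1 := key _ hl1.
have c : 0 < #|Q l.-1| <= l.
  apply/andP; split; last by lia.
  by apply/card_gt0P; exists j; apply: jQ.
have [j0 hj0 hadv] := advex hr c.
have /card_le1_eqP H1 : #|Q l.-1| <= 1 by lia.
have e1 : j0 = j by have := H1 _ _ hj0 (jQ _ hl1); move=> ->.
subst j0.
rewrite !hpos in hadv; lia.
Qed.

Lemma subQ (M J : finType) (sq : J -> seq M) (ind : J -> nat) h l (pos : nat -> J -> nat) V m N :
  sws_run sq ind h l pos -> 0 < l -> V * l + l <= N ->
  l < #|Qset sq ind h l (V * l) (pos (V * l)) m| ->
  forall x, x \in Qset sq ind h l (V * l) (pos (V * l)) m -> pos N x = pos (V * l) x.
Proof.
move=> hr l0 hN hbig.
set X := V * l in hN hbig *.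
pose Q k := Qset sq ind h l (X + k) (pos (X + k)) m.
have inv : forall k, k < l -> Q 0 \subset Q k.
  elim => [|k IH] hk; first by apply: subxx.
  apply/subsetP => x hx.
  have xk := subsetP (IH (ltnW hk)) x hx.
  have big : l < #|Q k|.
    by apply: (leq_trans _ (subset_leq_card (IH (ltnW hk)))); rewrite /Q addn0.
  have ea' : pos (X + k).+1 x = pos (X + k) x.
    by apply: (noadv hr xk); rewrite negb_and; apply/orP; right; rewrite -ltnNge; move: big; rewrite /Q; done.
  move: xk; rewrite /Q addnS !inQ ea' => /and3P [-> -> /=].
  have d1 : (X + k) %/ l = V by rewrite phase_div //; lia.
  have d2 : (X + k).+1 %/ l = V by rewrite -addnS phase_div //.
  by rewrite d1 d2.
move=> x hx.
have hx0 : x \in Q 0 by rewrite /Q addn0.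
have hl1 : l.-1 < l by lia.
have xk := subsetP (inv _ hl1) x hx0.
have big : l < #|Q l.-1|.
  by apply: (leq_trans _ (subset_leq_card (inv _ hl1))); rewrite /Q addn0.
have ea' : pos (X + l.-1).+1 x = pos (X + l.-1) x.
  by apply: (noadv hr xk); rewrite negb_and; apply/orP; right; rewrite -ltnNge; move: big; rewrite /Q; done.
have e2 : (X + l.-1).+1 = X + l by lia.
rewrite e2 in ea'.
move: xk hx; rewrite /Q !inQ => /and3P [_ _ /eqP v1] /and3P [_ _ /eqP v2].
have d1 : (X + l.-1) %/ l = V by rewrite /X phase_div.
have dX : X %/ l = V by rewrite /X mulnK.
rewrite d1 in v1; rewrite dX in v2.
have ee : pos X x = pos (X + l.-1) x by lia.
rewrite ee -ea'.
apply: (stuck_fwd hr) => //.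
have dl : (X + l) %/ l = V.+1 by rewrite /X -mulSnr mulnK.
by rewrite ea' -ee v2 dl.
Qed.

Lemma sum_card (T : finType) (A : {set T}) : \sum_(j : T) ((j \in A) : nat) = #|A|.
Proof. by rewrite -sum1_card [RHS]big_mkcond /=; apply: eq_bigr => j _; case: (j \in A). Qed.

Lemma le_sum1 (I : finType) (F : I -> nat) i : F i <= \sum_(k : I) F k.
Proof. by rewrite (bigD1 i) //= leq_addr. Qed.

Unset Implicit Arguments.

Theorem lemma5p14
  (M J : finType) (c : nat) (sq : J -> seq M) (ind : J -> nat)
  (h : seq M -> nat -> nat) (L l : nat)
  (ind_inj : injective ind)
  (ind_range : forall j, 1 <= ind j <= #|M| ^ c)
  (h_range : forall s i, 1 <= i <= #|M| ^ c -> h s i < L)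
  (hLD : Dmax sq <= L)
  (hgood : good_hash sq ind h L l)
  (pos : nat -> J -> nat)
  (hrun : sws_run sq ind h l pos) :
  #|J| <= 2 * #|[set j | pos (2 * L * l) j == size (sq j)]|.
Proof.
set N := 2 * L * l.
set C := [set j | pos N j == size (sq j)].
rewrite leqNgt; apply/negP => hlt.
have hjL : forall j, hj sq ind h j < L by move=> j; apply: h_range.
have hsz : forall j, size (sq j) <= L.
  move=> j; apply: leq_trans hLD; rewrite /Dmax.
  exact: (leq_bigmax j).
have hinc : forall j, pos N j != size (sq j) -> pos N j < size (sq j).
  by move=> j hne; have := pos_le N j hrun; rewrite leq_eqVlt (negbTE hne).
pose S (T : 'I_(2 * L)) (m : M) :=
  [set j | [&& pos N j != size (sq j), hj sq ind h j + pos N j == T &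
             onth (sq j) (pos N j) == Some m]].
pose B (T : 'I_(2 * L)) (m : M) := [seq (j, pos N j) | j <- enum (S T m)].
have memB : forall T m p, p \in B T m -> exists2 j, p = (j, pos N j) & j \in S T m.
  move=> T m p /mapP [j hj ->]; exists j => //; by rewrite mem_enum in hj.
have sizeB : forall T m, size (B T m) = #|S T m| by move=> T m; rewrite size_map cardE.
apply: (hgood B); last first.
  move=> T m p /memB [j -> ]; rewrite inE => /and3P [h1 /eqP h2 _].
  by rewrite /virt_eq /= hinc //= h2 eqxx.
split.
- move=> T m; rewrite map_inj_uniq ?enum_uniq //; by move=> a b [].
- move=> T m p /memB [j ->]; rewrite inE => /and3P [_ _ /eqP ->] //.
- move=> T m T' m' p p' /memB [j -> hj1] /memB [j' -> hj2] /= ejj; subst j'.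
  move: hj1 hj2; rewrite !inE => /and3P [_ /eqP e1 /eqP o1] /and3P [_ /eqP e2 /eqP o2].
  split => //; first by apply: val_inj; rewrite /= -e1 -e2.
  by rewrite o1 in o2; case: o2.
- move=> T m; rewrite sizeB.
  case: (posnP #|S T m|) => [->|hpos]; [by left | right].
  rewrite max_card andbT.
  case: (posnP l) => [->//|l0].
  have /card_gt0P [j hjS] := hpos.
  move: (hjS); rewrite inE => /and3P [hne /eqP hV /eqP ho].
  have hp := hinc j hne.
  have hT := ltn_ord T.
  have hVN : T * l + l <= N.
    rewrite -mulSnr /N leq_mul2r; apply/orP; right; lia.
  have hback := stuck_back hrun l0 (N:=N) (j:=j).
  rewrite hV in hback.
  have hbig := bigQ hrun l0 (V:=T) (j:=j) (m:=m) (p:=pos N j).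
  have hb : l < #|Qset sq ind h l (T * l) (pos (T * l)) m|.
    apply: hbig => //.
    move=> t /andP [t1 t2]; apply: hback; first lia.
    by rewrite t1 /=; lia.
  apply: (leq_trans hb); apply: subset_leq_card; apply/subsetP => x hx.
  have ex := subQ hrun l0 hVN hb hx.
  move: hx; rewrite inQ -ex mulnK // inE => /and3P [o s e].
  by rewrite o e andbT; rewrite neq_ltn s.
- have hcomp : #|J| <= #|C| + \sum_(T < 2 * L) \sum_(m : M) size (B T m).
    rewrite -(cardC C); rewrite leq_add2l.
    have eqS : \sum_(T < 2 * L) \sum_(m : M) size (B T m) =
      \sum_(T < 2 * L) \sum_(m : M) \sum_(j : J) ((j \in S T m) : nat).
      by apply: eq_bigr => T _; apply: eq_bigr => m _; rewrite sizeB sum_card.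
    rewrite eqS.
    under eq_bigr => T _ do rewrite exchange_big /=.
    rewrite exchange_big /=.
    rewrite -sum1_card big_mkcond /=; apply: leq_sum => j _; case: ifP => // hne.
    rewrite !inE in hne.
    have hp := hinc j hne.
    have hV : hj sq ind h j + pos N j < 2 * L.
      have := hjL j; have := hsz j; lia.
    case ho : (onth (sq j) (pos N j)) => [m|]; last first.
      by have := onthTE (sq j) (pos N j); rewrite ho hp.
    apply: (leq_trans _ (le_sum1 _ (Ordinal hV))).
    apply: (leq_trans _ (le_sum1 _ m)).
    by rewrite inE hne /= eqxx ho eqxx.
  lia.
Qed.
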